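(* Fix a range-restricted CHR program $\mathcal{P}$. Let $\langle \mathbb{G};\emptyset;\mathbb{B};\mathbb{V}\rangle$ and $\langle \mathbb{L};\mathbb{P};\mathbb{B}';\mathbb{V}\rangle$ be $\omega_!$ states. If $\langle \mathbb{G};\emptyset;\mathbb{B};\mathbb{V}\rangle \rightarrowtail_!^* \langle \mathbb{L};\mathbb{P};\mathbb{B}';\mathbb{V}\rangle$ (in $\mathcal{P}$), then for every $N\in\mathbb{N}$ there exists an $\omega_e$ state $\langle \mathbb{G}';\mathbb{B}';\mathbb{V}\rangle$ such that $\langle \mathbb{G};\mathbb{B};\mathbb{V}\rangle \rightarrowtail_e^* \langle \mathbb{G}';\mathbb{B}';\mathbb{V}\rangle$ (in $\mathcal{P}$) and $\mathbb{L}\uplus N\cdot\mathbb{P}\subseteq \mathbb{G}'$ (multiset inclusion, where $N\cdot\mathbb{P}$ is the multiset $\mathbb{P}$ with all multiplicities multiplied by $N$).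
   Context: Constraint Handling Rules (CHR). There are user-defined (CHR) constraints and built-in constraints; built-ins are interpreted by a satisfaction-complete, decidable constraint theory $\mathcal{CT}$. A rule has the form $r\ @\ H_1\setminus H_2 \Leftrightarrow G\mid B_c,B_b$ where $H_1$ (kept head) and $H_2$ (removed head) are multisets of CHR constraints, the guard $G$ is a conjunction of built-ins, $B_c$ is a multiset of CHR constraints and $B_b$ a conjunction of built-ins. If $H_2=\emptyset$ it is a propagation rule. A variant of a rule is obtained by renaming its variables to pairwise distinct variables. The local variables of a rule are $\mathrm{vars}(G,B_c,B_b)\setminus\mathrm{vars}(H_1,H_2)$; a rule is range-restricted if it has no local variables; a program is a set of rules, range-restricted if all its rules are. $\omega_e$: a state is $\langle \mathbb{G};\mathbb{B};\mathbb{V}\rangle$ with $\mathbb{G}$ a multiset of CHR constraints, $\mathbb{B}$ a conjunction of built-ins, $\mathbb{V}$ a set of (global) variables. A variable of $\mathbb{B}$ not in $\mathbb{V}$ or $\mathbb{G}$ is strictly local. State equivalence $\equiv_e$ is the smallest equivalence relation with: (1) $\langle \mathbb{G};X\doteq t\wedge\mathbb{B};\mathbb{V}\rangle\equiv_e\langle \mathbb{G}[X/t];X\doteq t\wedge\mathbb{B};\mathbb{V}\rangle$; (2) if $\mathcal{CT}\models \exists\bar s.\mathbb{B}\leftrightarrow\exists\bar s'.\mathbb{B}'$ with $\bar s,\bar s'$ the strictly local variables of $\mathbb{B},\mathbb{B}'$, then $\langle \mathbb{G};\mathbb{B};\mathbb{V}\rangle\equiv_e\langle \mathbb{G};\mathbb{B}';\mathbb{V}\rangle$;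 (3) if $X$ occurs in neither $\mathbb{G}$ nor $\mathbb{B}$, $\langle \mathbb{G};\mathbb{B};\{X\}\cup\mathbb{V}\rangle\equiv_e\langle \mathbb{G};\mathbb{B};\mathbb{V}\rangle$; (4) $\langle \mathbb{G};\bot;\mathbb{V}\rangle\equiv_e\langle \mathbb{G}';\bot;\mathbb{V}\rangle$. Transitions are on equivalence classes: for a variant of a rule $r\ @\ H_1\setminus H_2\Leftrightarrow G\mid B_c,B_b$ of $\mathcal{P}$ whose local variables are disjoint from the variables of the pre-state, $[\langle H_1\uplus H_2\uplus\mathbb{G};G\wedge\mathbb{B};\mathbb{V}\rangle]\rightarrowtail_e[\langle H_1\uplus B_c\uplus\mathbb{G};G\wedge B_b\wedge\mathbb{B};\mathbb{V}\rangle]$. $\rightarrowtail_e^*$ is the reflexive-transitive closure; states are identified with their classes. $\omega_!$ (defined only for range-restricted programs): a state is $\langle \mathbb{L};\mathbb{P};\mathbb{B};\mathbb{V}\rangle$ with $\mathbb{L}$ (linear store) and $\mathbb{P}$ (persistent store) multisets of CHR constraints, $\mathbb{B}$ a conjunction of built-ins, $\mathbb{V}$ a set of global variables; a variable not in $\mathbb{V}\cup\mathbb{L}\cup\mathbb{P}$ is strictly local. Equivalence $\equiv_!$ is the smallest equivalence relation with: (1) $\langle \mathbb{L};\mathbb{P};X\doteq t\wedge\mathbb{B};\mathbb{V}\rangle\equiv_!\langle \mathbb{L}[X/t];\mathbb{P}[X/t];X\doteq t\wedge\mathbb{B};\mathbb{V}\rangle$; (2) if $\mathcal{CT}\models\exists\bar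 s.\mathbb{B}\leftrightarrow\exists\bar s'.\mathbb{B}'$ ($\bar s,\bar s'$ strictly local variables), $\langle \mathbb{L};\mathbb{P};\mathbb{B};\mathbb{V}\rangle\equiv_!\langle \mathbb{L};\mathbb{P};\mathbb{B}';\mathbb{V}\rangle$; (3) if $X$ does not occur in $\mathbb{L},\mathbb{P},\mathbb{B}$, $\langle \mathbb{L};\mathbb{P};\mathbb{B};\{X\}\cup\mathbb{V}\rangle\equiv_!\langle \mathbb{L};\mathbb{P};\mathbb{B};\mathbb{V}\rangle$; (4) $\langle \mathbb{L};\mathbb{P};\bot;\mathbb{V}\rangle\equiv_!\langle \mathbb{L}';\mathbb{P}';\bot;\mathbb{V}'\rangle$; (5) $\langle \mathbb{L};P\uplus P\uplus\mathbb{P};\mathbb{B};\mathbb{V}\rangle\equiv_!\langle \mathbb{L};P\uplus\mathbb{P};\mathbb{B};\mathbb{V}\rangle$. Transitions $\rightarrowtail_!$ on equivalence classes, for a (variant of a) rule of $\mathcal{P}$: ApplyLinear: for a rule $r\ @\ (H_1^l\uplus H_1^p)\setminus(H_2^l\uplus H_2^p)\Leftrightarrow G\mid B_c,B_b$ with $H_2^l\neq\emptyset$, $\sigma=[\langle H_1^l\uplus H_2^l\uplus\mathbb{L};H_1^p\uplus H_2^p\uplus\mathbb{P};G\wedge\mathbb{B};\mathbb{V}\rangle]\rightarrowtail_!\tau=[\langle H_1^l\uplus B_c\uplus\mathbb{L};H_1^p\uplus H_2^p\uplus\mathbb{P};G\wedge\mathbb{B}\wedge B_b;\mathbb{V}\rangle]$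 provided $\sigma\neq\tau$. ApplyPersistent: for a rule $r\ @\ (H_1^l\uplus H_1^p)\setminus H_2^p\Leftrightarrow G\mid B_c,B_b$, $\sigma=[\langle H_1^l\uplus\mathbb{L};H_1^p\uplus H_2^p\uplus\mathbb{P};G\wedge\mathbb{B};\mathbb{V}\rangle]\rightarrowtail_!\tau=[\langle H_1^l\uplus\mathbb{L};H_1^p\uplus H_2^p\uplus B_c\uplus\mathbb{P};G\wedge\mathbb{B}\wedge B_b;\mathbb{V}\rangle]$ provided $\sigma\neq\tau$. $\rightarrowtail_!^*$ is the reflexive-transitive closure. *)

(* Defs.v *)
From Stdlib Require Import List Permutation Arith Relations.
Import ListNotations.
Open Scope bool_scope.
Set Implicit Arguments.

Inductive term (F : Type) : Type :=
| TVar (x : nat)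
| TApp (f : F) (args : list (term F)).
Arguments TVar {F} x.
Arguments TApp {F} f args.

Fixpoint occ_t {F : Type} (x : nat) (t : term F) : bool :=
  match t with
  | TVar y => Nat.eqb x y
  | TApp _ ts => existsb (occ_t x) ts
  end.

Fixpoint subst_t {F : Type} (X : nat) (s : term F) (t : term F) : term F :=
  match t with
  | TVar y => if Nat.eqb y X then s else TVar y
  | TApp f ts => TApp f (map (subst_t X s) ts)
  end.

Fixpoint rename_t {F : Type} (rho : nat -> nat) (t : term F) : term F :=
  match t with
  | TVar y => TVar (rho y)
  | TApp f ts => TApp f (map (rename_t rho) ts)
  end.

(* Built-in constraints (atoms): equality, true, false, other built-in
   predicates Pb. A conjunction of built-ins is a list of atoms. *)
Inductive batom (F Pb : Type) : Type :=
| BEq (t1 t2 : term F)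
| BTrue
| BFalse
| BPred (p : Pb) (args : list (term F)).
Arguments BEq {F Pb} t1 t2.
Arguments BTrue {F Pb}.
Arguments BFalse {F Pb}.
Arguments BPred {F Pb} p args.

Inductive chr (F Pc : Type) : Type :=
| CC (c : Pc) (args : list (term F)).
Arguments CC {F Pc} c args.

Definition occ_b {F Pb : Type} (x : nat) (a : batom F Pb) : bool :=
  match a with
  | BEq t1 t2 => occ_t x t1 || occ_t x t2
  | BTrue | BFalse => false
  | BPred _ ts => existsb (occ_t x) ts
  end.

Definition rename_b {F Pb : Type} (rho : nat -> nat) (a : batom F Pb) : batom F Pb :=
  match a with
  | BEq t1 t2 => BEq (rename_t rho t1) (rename_t rho t2)
  | BTrue => BTrue
  | BFalse => BFalse
  | BPred p ts => BPred p (map (rename_t rho) ts)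
  end.

Definition occ_c {F Pc : Type} (x : nat) (c : chr F Pc) : bool :=
  match c with CC _ ts => existsb (occ_t x) ts end.

Definition subst_c {F Pc : Type} (X : nat) (s : term F) (c : chr F Pc) : chr F Pc :=
  match c with CC p ts => CC p (map (subst_t X s) ts) end.

Definition rename_c {F Pc : Type} (rho : nat -> nat) (c : chr F Pc) : chr F Pc :=
  match c with CC p ts => CC p (map (rename_t rho) ts) end.

Definition occ_bs {F Pb : Type} (x : nat) (B : list (batom F Pb)) : bool :=
  existsb (occ_b x) B.
Definition occ_cs {F Pc : Type} (x : nat) (G : list (chr F Pc)) : bool :=
  existsb (occ_c x) G.

Record model (F Pb : Type) : Type := Model {
  dom : Type;
  dom_pt : dom;                              (* domains are nonempty *)
  fI : F -> list dom -> dom;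
  pI : Pb -> list dom -> Prop
}.

Fixpoint eval_t {F Pb : Type} (M : model F Pb) (v : nat -> dom M) (t : term F)
  : dom M :=
  match t with
  | TVar x => v x
  | TApp f ts => fI M f (map (eval_t M v) ts)
  end.

Definition sat_b {F Pb : Type} (M : model F Pb) (v : nat -> dom M) (a : batom F Pb)
  : Prop :=
  match a with
  | BEq t1 t2 => eval_t M v t1 = eval_t M v t2
  | BTrue => True
  | BFalse => False
  | BPred p ts => pI M p (map (eval_t M v) ts)
  end.

Definition sat_bs {F Pb : Type} (M : model F Pb) (v : nat -> dom M)
  (B : list (batom F Pb)) : Prop :=
  forall a, In a B -> sat_b M v a.

Inductive formula (F Pb : Type) : Type :=
| FAtom (a : batom F Pb)
| FNot (phi : formula F Pb)
| FAnd (phi psi : formula F Pb)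
| FEx (x : nat) (phi : formula F Pb).
Arguments FAtom {F Pb} a.
Arguments FNot {F Pb} phi.
Arguments FAnd {F Pb} phi psi.
Arguments FEx {F Pb} x phi.

Definition upd {D : Type} (v : nat -> D) (x : nat) (d : D) : nat -> D :=
  fun y => if Nat.eqb y x then d else v y.

Fixpoint sat_f {F Pb : Type} (M : model F Pb) (v : nat -> dom M) (phi : formula F Pb)
  : Prop :=
  match phi with
  | FAtom a => sat_b M v a
  | FNot p => ~ sat_f M v p
  | FAnd p q => sat_f M v p /\ sat_f M v q
  | FEx x p => exists d, sat_f M (upd v x d) p
  end.

(* A theory is a set of formulas (read as universally closed). *)
Definition theory (F Pb : Type) := formula F Pb -> Prop.

Definition is_model {F Pb : Type} (CT : theory F Pb) (M : model F Pb) : Prop :=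
  forall phi, CT phi -> forall v, sat_f M v phi.

(* CT |= Phi, Phi a (semantically given) formula with free variables,
   read as universally closed *)
Definition entails {F Pb : Type} (CT : theory F Pb)
  (Phi : forall M : model F Pb, (nat -> dom M) -> Prop) : Prop :=
  forall M, is_model CT M -> forall v, Phi M v.

(* satisfaction-completeness: for every conjunction B of built-ins,
   CT |= exists B  or  CT |= ~ exists B  (exists-closure over all variables) *)
Definition sat_complete {F Pb : Type} (CT : theory F Pb) : Prop :=
  forall B : list (batom F Pb),
    entails CT (fun M _ => exists w, sat_bs M w B) \/
    entails CT (fun M _ => ~ exists w, sat_bs M w B).

(* [exists s. B] at valuation v, where s is the set of variables [loc] *)
Definition ex_loc {F Pb : Type} (M : model F Pb) (v : nat -> dom M)
  (B : list (batom F Pb)) (loc : nat -> Prop) : Prop :=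
  exists w, (forall x, ~ loc x -> w x = v x) /\ sat_bs M w B.

Record rule (F Pb Pc : Type) : Type := Rule {
  kept : list (chr F Pc);
  removed : list (chr F Pc);
  guard : list (batom F Pb);
  bodyc : list (chr F Pc);
  bodyb : list (batom F Pb)
}.

Definition rename_rule {F Pb Pc : Type} (rho : nat -> nat) (r : rule F Pb Pc)
  : rule F Pb Pc :=
  Rule (map (rename_c rho) (kept r)) (map (rename_c rho) (removed r))
       (map (rename_b rho) (guard r)) (map (rename_c rho) (bodyc r))
       (map (rename_b rho) (bodyb r)).

Definition program (F Pb Pc : Type) := list (rule F Pb Pc).

Definition variant {F Pb Pc : Type} (P : program F Pb Pc) (r' : rule F Pb Pc) : Prop :=
  exists r rho, In r P /\ (forall x y, rho x = rho y -> x = y) /\ r' = rename_rule rho r.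

Definition local_var {F Pb Pc : Type} (r : rule F Pb Pc) (x : nat) : Prop :=
  (occ_bs x (guard r) || occ_cs x (bodyc r) || occ_bs x (bodyb r)) = true /\
  (occ_cs x (kept r) || occ_cs x (removed r)) = false.

Definition range_restricted {F Pb Pc : Type} (P : program F Pb Pc) : Prop :=
  forall r, In r P -> forall x, ~ local_var r x.

Definition bot {F Pb : Type} : list (batom F Pb) := [BFalse].

Record estate (F Pb Pc : Type) : Type := ES {
  eG : list (chr F Pc);          (* multiset, up to permutation *)
  eB : list (batom F Pb);        (* conjunction *)
  eV : nat -> Prop               (* set of global variables *)
}.
Arguments ES {F Pb Pc} eG eB eV.

Definition sloc_e {F Pb Pc : Type} (G : list (chr F Pc)) (B : list (batom F Pb))
  (V : nat -> Prop) (x : nat) : Prop :=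
  occ_bs x B = true /\ ~ V x /\ occ_cs x G = false.

Inductive eqv_e {F Pb Pc : Type} (CT : theory F Pb) :
  estate F Pb Pc -> estate F Pb Pc -> Prop :=
| eqe_refl s : eqv_e CT s s
| eqe_sym s t : eqv_e CT s t -> eqv_e CT t s
| eqe_trans s t u : eqv_e CT s t -> eqv_e CT t u -> eqv_e CT s u
(* multisets: list representations up to permutation *)
| eqe_perm G G' B V : Permutation G G' -> eqv_e CT (ES G B V) (ES G' B V)
| eqe_subst G X t B V :
    eqv_e CT (ES G (BEq (TVar X) t :: B) V)
             (ES (map (subst_c X t) G) (BEq (TVar X) t :: B) V)
| eqe_ct G B B' V :
    entails CT (fun M v => ex_loc M v B (sloc_e G B V) <->
                           ex_loc M v B' (sloc_e G B' V)) ->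
    eqv_e CT (ES G B V) (ES G B' V)
| eqe_var G B V V' X :
    occ_cs X G = false -> occ_bs X B = false ->
    (forall y, V' y <-> (y = X \/ V y)) ->
    eqv_e CT (ES G B V') (ES G B V)
| eqe_bot G G' V : eqv_e CT (ES G bot V) (ES G' bot V).

Inductive raw_e {F Pb Pc : Type} (P : program F Pb Pc) :
  estate F Pb Pc -> estate F Pb Pc -> Prop :=
| raw_e_apply r G B V :
    variant P r ->
    (forall x, local_var r x ->
       occ_cs x G = false /\ occ_bs x B = false /\ ~ V x /\
       occ_cs x (kept r) = false /\ occ_cs x (removed r) = false /\
       occ_bs x (guard r) = false) ->
    raw_e P (ES (kept r ++ removed r ++ G) (guard r ++ B) V)
            (ES (kept r ++ bodyc r ++ G) (guard r ++ bodyb r ++ B) V).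

(* transitions on equivalence classes *)
Definition step_e {F Pb Pc : Type} (CT : theory F Pb) (P : program F Pb Pc)
  (s t : estate F Pb Pc) : Prop :=
  exists s0 t0, eqv_e CT s s0 /\ raw_e P s0 t0 /\ eqv_e CT t0 t.

Definition star_e {F Pb Pc : Type} (CT : theory F Pb) (P : program F Pb Pc) :
  estate F Pb Pc -> estate F Pb Pc -> Prop :=
  clos_refl_trans _ (fun s t => step_e CT P s t \/ eqv_e CT s t).

Record bstate (F Pb Pc : Type) : Type := BS {
  bL : list (chr F Pc);          (* linear store (multiset) *)
  bP : list (chr F Pc);          (* persistent store (multiset) *)
  bB : list (batom F Pb);
  bV : nat -> Prop
}.
Arguments BS {F Pb Pc} bL bP bB bV.

Definition sloc_b {F Pb Pc : Type} (L P : list (chr F Pc)) (B : list (batom F Pb))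
  (V : nat -> Prop) (x : nat) : Prop :=
  occ_bs x B = true /\ ~ V x /\ occ_cs x L = false /\ occ_cs x P = false.

Inductive eqv_b {F Pb Pc : Type} (CT : theory F Pb) :
  bstate F Pb Pc -> bstate F Pb Pc -> Prop :=
| eqb_refl s : eqv_b CT s s
| eqb_sym s t : eqv_b CT s t -> eqv_b CT t s
| eqb_trans s t u : eqv_b CT s t -> eqv_b CT t u -> eqv_b CT s u
| eqb_perm L L' P P' B V :
    Permutation L L' -> Permutation P P' -> eqv_b CT (BS L P B V) (BS L' P' B V)
| eqb_subst L P X t B V :
    eqv_b CT (BS L P (BEq (TVar X) t :: B) V)
             (BS (map (subst_c X t) L) (map (subst_c X t) P) (BEq (TVar X) t :: B) V)
| eqb_ct L P B B' V :
    entails CT (fun M v => ex_loc M v B (sloc_b L P B V) <->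
                           ex_loc M v B' (sloc_b L P B' V)) ->
    eqv_b CT (BS L P B V) (BS L P B' V)
| eqb_var L P B V V' X :
    occ_cs X L = false -> occ_cs X P = false -> occ_bs X B = false ->
    (forall y, V' y <-> (y = X \/ V y)) ->
    eqv_b CT (BS L P B V') (BS L P B V)
| eqb_bot L P L' P' V V' : eqv_b CT (BS L P bot V) (BS L' P' bot V')
| eqb_dup L P0 P B V : eqv_b CT (BS L (P0 ++ P0 ++ P) B V) (BS L (P0 ++ P) B V).

Inductive raw_b {F Pb Pc : Type} (P : program F Pb Pc) :
  bstate F Pb Pc -> bstate F Pb Pc -> Prop :=
| raw_b_linear r H1l H1p H2l H2p L Ps B V :
    variant P r ->
    Permutation (kept r) (H1l ++ H1p) ->
    Permutation (removed r) (H2l ++ H2p) ->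
    H2l <> [] ->
    raw_b P (BS (H1l ++ H2l ++ L) (H1p ++ H2p ++ Ps) (guard r ++ B) V)
            (BS (H1l ++ bodyc r ++ L) (H1p ++ H2p ++ Ps) (guard r ++ B ++ bodyb r) V)
| raw_b_persistent r H1l H1p L Ps B V :
    variant P r ->
    Permutation (kept r) (H1l ++ H1p) ->
    raw_b P (BS (H1l ++ L) (H1p ++ removed r ++ Ps) (guard r ++ B) V)
            (BS (H1l ++ L) (H1p ++ removed r ++ bodyc r ++ Ps)
                (guard r ++ B ++ bodyb r) V).

(* transitions on classes, with the side condition sigma <> tau *)
Definition step_b {F Pb Pc : Type} (CT : theory F Pb) (P : program F Pb Pc)
  (s t : bstate F Pb Pc) : Prop :=
  exists s0 t0, eqv_b CT s s0 /\ raw_b P s0 t0 /\ eqv_b CT t0 t /\ ~ eqv_b CT s0 t0.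

Definition star_b {F Pb Pc : Type} (CT : theory F Pb) (P : program F Pb Pc) :
  bstate F Pb Pc -> bstate F Pb Pc -> Prop :=
  clos_refl_trans _ (fun s t => step_b CT P s t \/ eqv_b CT s t).

Definition msub {A : Type} (X Y : list A) : Prop :=
  exists R, Permutation (X ++ R) Y.

Definition mscale {A : Type} (N : nat) (X : list A) : list A :=
  concat (repeat X N).

(* Main.v *)
Require Import Defs.
From Stdlib Require Import List Permutation Arith Relations.
Import ListNotations.


Ltac psolve_f n :=
  match n with
  | O => fail 1 "psolve: out of fuel"
  | S ?m =>
    repeat rewrite <- app_assoc;
    first
    [ apply Permutation_refl
    | lazymatch goal with
      | |- Permutation (?x ++ _) (?x ++ _) => apply Permutation_app_head; psolve_f m
      | |- Permutation _ (?y ++ ?r) =>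
          apply (@Permutation_trans _ _ (r ++ y)); [ psolve_f m | apply Permutation_app_comm ]
      end ]
  end.
Ltac psolve := psolve_f 60%nat.

Section Gen.
Context {A : Type}.

Lemma mscale_S (n : nat) (X : list A) : mscale (S n) X = X ++ mscale n X.
Proof. reflexivity. Qed.

Lemma mscale_add (n m : nat) (X : list A) : mscale (n + m) X = mscale n X ++ mscale m X.
Proof. unfold mscale. rewrite repeat_app, concat_app. reflexivity. Qed.

Lemma mscale_nil n : mscale n (@nil A) = [].
Proof. induction n; simpl; auto. Qed.

Lemma mscale_app n (X Y : list A) :
  Permutation (mscale n (X ++ Y)) (mscale n X ++ mscale n Y).
Proof.
  induction n; simpl. constructor.
  change (Permutation ((X ++ Y) ++ mscale n (X ++ Y)) ((X ++ mscale n X) ++ (Y ++ mscale n Y))).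
  rewrite IHn. psolve.
Qed.

Lemma mscale_perm n (X Y : list A) : Permutation X Y -> Permutation (mscale n X) (mscale n Y).
Proof.
  intro H; induction n; simpl. constructor.
  change (Permutation (X ++ mscale n X) (Y ++ mscale n Y)). apply Permutation_app; auto.
Qed.

Lemma mscale_map {B0} (f : A -> B0) n X : mscale n (map f X) = map f (mscale n X).
Proof. induction n; simpl; auto. change (map f X ++ mscale n (map f X) = map f (X ++ mscale n X)).
  rewrite map_app, IHn; auto. Qed.

Lemma mscale_incl n (X : list A) : incl (mscale n X) X.
Proof. induction n; simpl. intros a []. change (incl (X ++ mscale n X) X).
  apply incl_app; auto. apply incl_refl. Qed.

Lemma msub_perm_r (X Y Y' : list A) : msub X Y -> Permutation Y Y' -> msub X Y'.
Proof. intros [R H] H'. exists R. eapply Permutation_trans; eauto. Qed.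

Lemma msub_perm_l (X X' Y : list A) : Permutation X X' -> msub X Y -> msub X' Y.
Proof. intros H' [R H]. exists R. rewrite <- H'. auto. Qed.

Lemma msub_trans (X Y Z : list A) : msub X Y -> msub Y Z -> msub X Z.
Proof. intros [R1 H1] [R2 H2]. exists (R1 ++ R2). rewrite <- H2, <- H1. psolve. Qed.

Lemma msub_app_l (X R : list A) : msub X (X ++ R).
Proof. exists R; auto. Qed.

Lemma msub_incl (X Y : list A) : msub X Y -> incl X Y.
Proof. intros [R H] a Ha. eapply Permutation_in; eauto. apply in_or_app; auto. Qed.

Lemma msub_cancel (X Y Z : list A) : msub (X ++ Y) (X ++ Z) -> msub Y Z.
Proof. intros [R H]. exists R. rewrite <- app_assoc in H. eapply Permutation_app_inv_l; eauto. Qed.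

Lemma incl_perm (X Y : list A) : Permutation X Y -> incl X Y.
Proof. intros H a Ha; eapply Permutation_in; eauto. Qed.


Lemma existsb_incl_false (f : A -> bool) X Y : incl X Y -> existsb f Y = false -> existsb f X = false.
Proof.
  intros Hi Hy. destruct (existsb f X) eqn:E; auto.
  apply existsb_exists in E as [a [Ha Hfa]].
  assert (existsb f Y = true) by (apply existsb_exists; eauto). congruence.
Qed.

Lemma existsb_same (f : A -> bool) X Y : (forall a, In a X <-> In a Y) -> existsb f X = existsb f Y.
Proof.
  intro H. destruct (existsb f Y) eqn:E.
  - apply existsb_exists in E as [a [Ha Hfa]]. apply existsb_exists. exists a; split; auto; apply H; auto.
  - apply (existsb_incl_false f) with (Y := Y); auto. intros a; apply H.
Qed.
Lemma existsb_perm (f : A -> bool) X Y : Permutation X Y -> existsb f X = existsb f Y.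
Proof. intro H. apply existsb_same. intro a; split; intro.
  eapply Permutation_in; eauto. eapply Permutation_in; [apply Permutation_sym; exact H|auto]. Qed.
End Gen.


Section Ren.
Context {F Pb Pc : Type}.

Fixpoint term_ind2 (Q : term F -> Prop) (hv : forall x, Q (TVar x))
  (ha : forall f ts, Forall Q ts -> Q (TApp f ts)) (t : term F) : Q t :=
  match t with
  | TVar x => hv x
  | TApp f ts => ha f ts ((fix go (l : list (term F)) : Forall Q l :=
                            match l with
                            | [] => Forall_nil _
                            | u :: l' => Forall_cons _ (term_ind2 Q hv ha u) (go l')
                            end) ts)
  end.

Lemma occ_ren1 (rho : nat -> nat) x (t : term F) :
  occ_t x (rename_t rho t) = true -> exists y, x = rho y /\ occ_t y t = true.
Proof.
  induction t as [z|f ts IH] using term_ind2; simpl.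
  - intro H. apply Nat.eqb_eq in H. subst. exists z; split; auto. apply Nat.eqb_refl.
  - intro H. apply existsb_exists in H as [u [Hu Ho]].
    apply in_map_iff in Hu as [t0 [<- Ht0]].
    rewrite Forall_forall in IH. destruct (IH t0 Ht0 Ho) as [y [Hy Hy2]].
    exists y; split; auto. apply existsb_exists; eauto.
Qed.

Lemma occ_ren2 (rho : nat -> nat) y (t : term F) :
  occ_t y t = true -> occ_t (rho y) (rename_t rho t) = true.
Proof.
  induction t as [z|f ts IH] using term_ind2; simpl.
  - intro H. apply Nat.eqb_eq in H. subst. apply Nat.eqb_refl.
  - intro H. apply existsb_exists in H as [u [Hu Ho]].
    rewrite Forall_forall in IH. apply existsb_exists. exists (rename_t rho u).
    split; auto. apply in_map; auto.
Qed.

Lemma occs_ren1 (rho : nat -> nat) x (ts : list (term F)) :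
  existsb (occ_t x) (map (rename_t rho) ts) = true ->
  exists y, x = rho y /\ existsb (occ_t y) ts = true.
Proof.
  intro H. apply existsb_exists in H as [u [Hu Ho]].
  apply in_map_iff in Hu as [t0 [<- Ht0]].
  destruct (occ_ren1 _ _ _ Ho) as [y [Hy Hy2]]. exists y; split; auto.
  apply existsb_exists; eauto.
Qed.

Lemma occs_ren2 (rho : nat -> nat) y (ts : list (term F)) :
  existsb (occ_t y) ts = true -> existsb (occ_t (rho y)) (map (rename_t rho) ts) = true.
Proof.
  intro H. apply existsb_exists in H as [u [Hu Ho]].
  apply existsb_exists. exists (rename_t rho u). split. apply in_map; auto.
  apply occ_ren2; auto.
Qed.

Lemma occb_ren1 rho x (a : batom F Pb) :
  occ_b x (rename_b rho a) = true -> exists y, x = rho y /\ occ_b y a = true.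
Proof.
  destruct a; simpl; try discriminate.
  - intro H. apply Bool.orb_true_iff in H as [H|H];
    destruct (occ_ren1 _ _ _ H) as [y [Hy H2]]; exists y; split; auto;
    rewrite H2; auto using Bool.orb_true_r.
  - apply occs_ren1.
Qed.

Lemma occb_ren2 rho y (a : batom F Pb) :
  occ_b y a = true -> occ_b (rho y) (rename_b rho a) = true.
Proof.
  destruct a; simpl; try discriminate.
  - intro H. apply Bool.orb_true_iff in H as [H|H]; apply occ_ren2 with (rho := rho) in H;
    rewrite H; auto using Bool.orb_true_r.
  - apply occs_ren2.
Qed.

Lemma occc_ren1 rho x (c : chr F Pc) :
  occ_c x (rename_c rho c) = true -> exists y, x = rho y /\ occ_c y c = true.
Proof. destruct c; simpl. apply occs_ren1. Qed.

Lemma occc_ren2 rho y (c : chr F Pc) :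
  occ_c y c = true -> occ_c (rho y) (rename_c rho c) = true.
Proof. destruct c; simpl. apply occs_ren2. Qed.

Lemma occbs_ren1 rho x (B : list (batom F Pb)) :
  occ_bs x (map (rename_b rho) B) = true -> exists y, x = rho y /\ occ_bs y B = true.
Proof.
  unfold occ_bs. intro H. apply existsb_exists in H as [u [Hu Ho]].
  apply in_map_iff in Hu as [t0 [<- Ht0]].
  destruct (occb_ren1 _ _ _ Ho) as [y [Hy Hy2]]. exists y; split; auto.
  apply existsb_exists; eauto.
Qed.

Lemma occbs_ren2 rho y (B : list (batom F Pb)) :
  occ_bs y B = true -> occ_bs (rho y) (map (rename_b rho) B) = true.
Proof.
  unfold occ_bs. intro H. apply existsb_exists in H as [u [Hu Ho]].
  apply existsb_exists. exists (rename_b rho u). split. apply in_map; auto.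
  apply occb_ren2; auto.
Qed.

Lemma occcs_ren1 rho x (B : list (chr F Pc)) :
  occ_cs x (map (rename_c rho) B) = true -> exists y, x = rho y /\ occ_cs y B = true.
Proof.
  unfold occ_cs. intro H. apply existsb_exists in H as [u [Hu Ho]].
  apply in_map_iff in Hu as [t0 [<- Ht0]].
  destruct (occc_ren1 _ _ _ Ho) as [y [Hy Hy2]]. exists y; split; auto.
  apply existsb_exists; eauto.
Qed.

Lemma occcs_ren2 rho y (B : list (chr F Pc)) :
  occ_cs y B = true -> occ_cs (rho y) (map (rename_c rho) B) = true.
Proof.
  unfold occ_cs. intro H. apply existsb_exists in H as [u [Hu Ho]].
  apply existsb_exists. exists (rename_c rho u). split. apply in_map; auto.
  apply occc_ren2; auto.
Qed.

Lemma no_local (Prog : program F Pb Pc) (Hrr : range_restricted Prog) r :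
  variant Prog r -> forall x, ~ local_var r x.
Proof.
  intros [r0 [rho [Hin [_ ->]]]] x [H1 H2].
  unfold rename_rule in *; simpl in *.
  assert (exists y, x = rho y /\ (occ_bs y (guard r0) || occ_cs y (bodyc r0) || occ_bs y (bodyb r0)) = true)
    as [y [-> Hy]].
  { apply Bool.orb_true_iff in H1 as [H1|H1]; [apply Bool.orb_true_iff in H1 as [H1|H1]|].
    - destruct (occbs_ren1 _ _ _ H1) as [y [-> Hy]]; exists y; split; auto; rewrite Hy; reflexivity.
    - destruct (occcs_ren1 _ _ _ H1) as [y [-> Hy]]; exists y; split; auto; rewrite Hy;
      repeat rewrite Bool.orb_true_r; reflexivity.
    - destruct (occbs_ren1 _ _ _ H1) as [y [-> Hy]]; exists y; split; auto; rewrite Hy;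
      repeat rewrite Bool.orb_true_r; reflexivity. }
  apply (Hrr r0 Hin y). split; auto.
  apply Bool.orb_false_iff in H2 as [H2 H3].
  destruct (occ_cs y (kept r0)) eqn:E1.
  { apply occcs_ren2 with (rho := rho) in E1. congruence. }
  destruct (occ_cs y (removed r0)) eqn:E2; auto.
  apply occcs_ren2 with (rho := rho) in E2. congruence.
Qed.
End Ren.


Section Sem.
Context {F Pb Pc : Type} (CT : theory F Pb) (Prog : program F Pb Pc)
  (Hrr : range_restricted Prog).

Definition unsat (B : list (batom F Pb)) : Prop :=
  forall M, is_model CT M -> forall w, ~ sat_bs M w B.

Lemma ex_loc_ext M v (B : list (batom F Pb)) (l1 l2 : nat -> Prop) :
  (forall x, l1 x <-> l2 x) -> (ex_loc M v B l1 <-> ex_loc M v B l2).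
Proof.
  intro H; unfold ex_loc; split; intros [w [H1 H2]]; exists w; split; auto;
  intros x Hx; apply H1; intro Hc; apply Hx, H, Hc.
Qed.

Lemma sat_bs_same M w (B B' : list (batom F Pb)) :
  (forall a, In a B <-> In a B') -> sat_bs M w B -> sat_bs M w B'.
Proof. intros H HB a Ha. apply HB, H, Ha. Qed.

Lemma eqe_same (G : list (chr F Pc)) B B' V :
  (forall a, In a B <-> In a B') -> eqv_e CT (ES G B V) (ES G B' V).
Proof.
  intro H. apply eqe_ct. intros M _ v.
  assert (Ho : forall x, occ_bs x B = occ_bs x B') by (intro; apply existsb_same; auto).
  unfold ex_loc, sloc_e. split; intros [w [H1 H2]]; exists w; split.
  - intros x Hx; apply H1; rewrite Ho; auto.
  - eapply sat_bs_same; eauto.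
  - intros x Hx; apply H1; rewrite <- Ho; auto.
  - eapply sat_bs_same; eauto. intro; split; apply H.
Qed.

Lemma eqe_unsat (G : list (chr F Pc)) B V :
  unsat B -> eqv_e CT (ES G B V) (ES G bot V).
Proof.
  intro H. apply eqe_ct. intros M HM v. unfold ex_loc. split; intros [w [_ H2]].
  - exfalso; eapply H; eauto.
  - exfalso. apply (H2 BFalse); simpl; auto.
Qed.

Lemma unsat_bot : unsat bot.
Proof. intros M _ w H. apply (H BFalse); simpl; auto. Qed.

Lemma unsat_incl B B' : incl B B' -> unsat B -> unsat B'.
Proof. intros Hi H M HM w Hw. apply (H M HM w). intros a Ha; apply Hw, Hi, Ha. Qed.

Lemma unsat_ct B B' (loc loc' : nat -> Prop) :
  entails CT (fun M v => ex_loc M v B loc <-> ex_loc M v B' loc') ->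
  unsat B -> unsat B'.
Proof.
  intros He H M HM w Hw. destruct (proj2 (He M HM w)) as [w' [_ Hw']].
  exists w; split; auto. eapply H; eauto.
Qed.

Lemma se_eqv s t : eqv_e CT s t -> star_e CT Prog s t.
Proof. intro; apply rt_step; right; auto. Qed.

Lemma se_raw s t : raw_e Prog s t -> star_e CT Prog s t.
Proof. intro; apply rt_step; left. exists s, t; repeat split; auto using eqe_refl. Qed.

Lemma se_trans s t u : star_e CT Prog s t -> star_e CT Prog t u -> star_e CT Prog s u.
Proof. apply rt_trans. Qed.

Lemma se_perm G G' B V : Permutation G G' -> star_e CT Prog (ES G B V) (ES G' B V).
Proof. intro; apply se_eqv, eqe_perm; auto. Qed.

Lemma eqv_V (s t : estate F Pb Pc) : eqv_e CT s t -> eqv_e CT (ES (@nil (chr F Pc)) bot (eV s)) (ES [] bot (eV t)).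
Proof.
  induction 1; simpl; auto using eqe_refl.
  - apply eqe_sym; auto.
  - eapply eqe_trans; eauto.
  - eapply eqe_var; eauto.
Qed.

Lemma star_V s t : star_e CT Prog s t -> eqv_e CT (ES (@nil (chr F Pc)) bot (eV s)) (ES [] bot (eV t)).
Proof.
  induction 1 as [s t [[s0 [t0 [H1 [H2 H3]]]]|H]| |]; auto using eqe_refl.
  - apply eqv_V in H1, H3. destruct H2. simpl in *. eapply eqe_trans; eauto.
  - apply eqv_V; auto.
  - eapply eqe_trans; eauto.
Qed.

Lemma raw_apply r W B V :
  variant Prog r ->
  raw_e Prog (ES (kept r ++ removed r ++ W) (guard r ++ B) V)
             (ES (kept r ++ bodyc r ++ W) (guard r ++ bodyb r ++ B) V).
Proof.
  intro Hv. apply raw_e_apply; auto. intros x Hx. exfalso; eapply no_local; eauto.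
Qed.

Lemma iter r V : variant Prog r -> forall k W X, incl (bodyb r) X ->
  star_e CT Prog (ES (kept r ++ mscale k (removed r) ++ W) (guard r ++ X) V)
                 (ES (kept r ++ mscale k (bodyc r) ++ W) (guard r ++ X) V).
Proof.
  intros Hv k; induction k as [|k IH]; intros W X HX.
  - apply rt_refl.
  - rewrite !mscale_S, <- !app_assoc.
    eapply se_trans; [apply se_raw, raw_apply; auto|].
    eapply se_trans; [apply se_eqv, eqe_same|].
    { instantiate (1 := guard r ++ X). intro a; rewrite !in_app_iff; intuition. }
    eapply se_trans; [apply se_perm|].
    { instantiate (1 := kept r ++ mscale k (removed r) ++ (bodyc r ++ W)). psolve. }
    eapply se_trans; [apply IH; auto|].
    apply se_perm. psolve.
Qed.

End Sem.


Section Main.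
Context {F Pb Pc : Type} (CT : theory F Pb) (Prog : program F Pb Pc)
  (Hrr : range_restricted Prog) (st0 : estate F Pb Pc).

Definition Alive (s : bstate F Pb Pc) : Prop :=
  forall N, exists G' R, star_e CT Prog st0 (ES G' (bB s) (bV s)) /\
    Permutation G' (bL s ++ R) /\ incl R (bP s) /\ msub (mscale (S N) (bP s)) R.

Definition Dead : Prop := exists t, star_e CT Prog st0 t /\ unsat CT (eB t).

Definition Inv (s : bstate F Pb Pc) : Prop := Alive s \/ (unsat CT (bB s) /\ Dead).

Lemma occ_G (G' L R P : list (chr F Pc)) : Permutation G' (L ++ R) -> incl R P -> incl P R ->
  forall x, occ_cs x G' = false <-> (occ_cs x L = false /\ occ_cs x P = false).
Proof.
  intros HG H1 H2 x. unfold occ_cs. rewrite (existsb_perm _ _ _ HG), existsb_app.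
  rewrite Bool.orb_false_iff. split; intros [Ha Hb]; split; auto;
  eapply existsb_incl_false; eauto.
Qed.

Lemma A_perm L L' P P' B V : Permutation L L' -> Permutation P P' ->
  Alive (BS L P B V) -> Alive (BS L' P' B V).
Proof.
  intros HL HP HA N. destruct (HA N) as [G' [R [H1 [H2 [H3 H4]]]]]; simpl in *.
  exists G', R; repeat split; auto.
  - rewrite H2, HL; auto.
  - intros a Ha; eapply Permutation_in; eauto.
  - eapply msub_perm_l; [|exact H4]. apply mscale_perm; auto.
Qed.

Lemma msub_map {A B0} (f : A -> B0) X Y : msub X Y -> msub (map f X) (map f Y).
Proof. intros [Z H]. exists (map f Z). rewrite <- map_app. apply Permutation_map; auto. Qed.

Lemma incl_map {A B0} (f : A -> B0) X Y : incl X Y -> incl (map f X) (map f Y).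
Proof. intros H a Ha. apply in_map_iff in Ha as [b [<- Hb]]. apply in_map; auto. Qed.

Lemma lift_list {A B0} (f : A -> B0) (P : list A) (Y : list B0) :
  incl Y (map f P) -> exists R, map f R = Y /\ incl R P.
Proof.
  induction Y as [|y Y IH]; intro H.
  - exists []; split; auto. intros a [].
  - destruct IH as [R [HR1 HR2]]. { intros a Ha; apply H; simpl; auto. }
    assert (Hy : In y (map f P)) by (apply H; simpl; auto).
    apply in_map_iff in Hy as [x [Hx1 Hx2]].
    exists (x :: R); split; simpl; [congruence|]. intros a [<-|Ha]; auto.
Qed.

Lemma A_subst L P X t B V :
  Alive (BS L P (BEq (TVar X) t :: B) V) ->
  Alive (BS (map (subst_c X t) L) (map (subst_c X t) P) (BEq (TVar X) t :: B) V).
Proof.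
  intros HA N. destruct (HA N) as [G' [R [H1 [H2 [H3 H4]]]]]; simpl in *.
  exists (map (subst_c X t) G'), (map (subst_c X t) R); repeat split.
  - eapply se_trans; eauto. apply se_eqv, eqe_subst.
  - rewrite <- map_app. apply Permutation_map; auto.
  - apply incl_map; auto.
  - rewrite mscale_map. apply msub_map; auto.
Qed.

Lemma A_subst_back L P X t B V :
  Alive (BS (map (subst_c X t) L) (map (subst_c X t) P) (BEq (TVar X) t :: B) V) ->
  Alive (BS L P (BEq (TVar X) t :: B) V).
Proof.
  intros HA N. destruct (HA N) as [G' [R'' [H1 [H2 [H3 [Z HZ]]]]]]; simpl in *.
  rewrite mscale_map in HZ.
  destruct (lift_list (subst_c X t) P Z) as [Z0 [HZ0 HZ1]].
  { intros a Ha. apply H3. eapply Permutation_in; eauto. apply in_or_app; auto. }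
  exists (L ++ mscale (S N) P ++ Z0), (mscale (S N) P ++ Z0); repeat split.
  - eapply se_trans; eauto. eapply se_trans; [apply se_perm|].
    { instantiate (1 := map (subst_c X t) (L ++ mscale (S N) P ++ Z0)).
      rewrite H2, !map_app, HZ0, HZ. apply Permutation_refl. }
    apply se_eqv, eqe_sym, eqe_subst.
  - apply Permutation_refl.
  - apply incl_app; auto. apply mscale_incl.
  - apply msub_app_l.
Qed.

Lemma A_ct L P B B' V :
  entails CT (fun M v => ex_loc M v B (sloc_b L P B V) <-> ex_loc M v B' (sloc_b L P B' V)) ->
  Alive (BS L P B V) -> Alive (BS L P B' V).
Proof.
  intros He HA N. destruct (HA N) as [G' [R [H1 [H2 [H3 H4]]]]]; simpl in *.
  exists G', R; repeat split; auto.
  eapply se_trans; eauto. apply se_eqv, eqe_ct. intros M HM v.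
  assert (HP : incl P R).
  { eapply incl_tran; [|apply msub_incl; eauto]. simpl. apply incl_appl, incl_refl. }
  pose proof (occ_G _ _ _ _ H2 H3 HP) as Ho.
  rewrite (ex_loc_ext M v B _ (sloc_b L P B V)), (ex_loc_ext M v B' _ (sloc_b L P B' V)).
  - apply He; auto.
  - intro x; unfold sloc_e, sloc_b. rewrite Ho. tauto.
  - intro x; unfold sloc_e, sloc_b. rewrite Ho. tauto.
Qed.

Lemma A_var L P B V V' X :
  occ_cs X L = false -> occ_cs X P = false -> occ_bs X B = false ->
  (forall y, V' y <-> (y = X \/ V y)) ->
  (Alive (BS L P B V') -> Alive (BS L P B V)) /\ (Alive (BS L P B V) -> Alive (BS L P B V')).
Proof.
  intros h1 h2 h3 h4. split; intros HA N; destruct (HA N) as [G' [R [H1 [H2 [H3 H4]]]]];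
  simpl in *; exists G', R; repeat split; auto; eapply se_trans; eauto; apply se_eqv.
  all: assert (HP : incl P R) by
    (eapply incl_tran; [|apply msub_incl; eauto]; simpl; apply incl_appl, incl_refl).
  all: pose proof (occ_G _ _ _ _ H2 H3 HP X) as Ho.
  - eapply eqe_var; eauto. apply Ho; auto.
  - eapply eqe_sym, eqe_var; eauto. apply Ho; auto.
Qed.

Lemma A_dup L P0 P B V :
  (Alive (BS L (P0 ++ P0 ++ P) B V) -> Alive (BS L (P0 ++ P) B V)) /\
  (Alive (BS L (P0 ++ P) B V) -> Alive (BS L (P0 ++ P0 ++ P) B V)).
Proof.
  split; intros HA N.
  - destruct (HA N) as [G' [R [H1 [H2 [H3 H4]]]]]; simpl in *.
    exists G', R; repeat split; auto.
    + intros a Ha. apply H3 in Ha. rewrite !in_app_iff in *. tauto.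
    + eapply msub_trans; [|exact H4]. exists (mscale (S N) P0).
      rewrite !mscale_app. psolve.
  - destruct (HA (N + S N)) as [G' [R [H1 [H2 [H3 H4]]]]]; simpl in *.
    exists G', R; repeat split; auto.
    + intros a Ha. apply H3 in Ha. rewrite !in_app_iff in *. tauto.
    + eapply msub_trans; [|exact H4]. exists (mscale (S N) P).
      change (S (N + S N)) with (S N + S N). rewrite mscale_add, !mscale_app. psolve.
Qed.

Lemma unsat_eqv (s t : bstate F Pb Pc) : eqv_b CT s t -> (unsat CT (bB s) <-> unsat CT (bB t)).
Proof.
  induction 1; simpl; try tauto.
  split; eapply unsat_ct; eauto. intros M HM v. symmetry. apply H; auto.
Qed.

Lemma Alive_Dead s : Alive s -> unsat CT (bB s) -> Dead.
Proof.
  intros HA Hu. destruct (HA 0) as [G' [R [H1 _]]]. exists (ES G' (bB s) (bV s)); auto.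
Qed.

Lemma Alive_eqv s t : eqv_b CT s t -> (Alive s -> Inv t) /\ (Alive t -> Inv s).
Proof.
  induction 1; simpl in *.
  - split; intro; left; auto.
  - tauto.
  - split.
    + intro h. destruct (proj1 IHeqv_b1 h) as [h'|[hu hd]]. apply IHeqv_b2; auto.
      right; split; auto. apply (unsat_eqv _ _ H0); auto.
    + intro h. destruct (proj2 IHeqv_b2 h) as [h'|[hu hd]]. apply IHeqv_b1; auto.
      right; split; auto. apply (unsat_eqv _ _ H); auto.
  - split; intro; left. apply A_perm with L P; auto.
    apply (A_perm L' L P' P); auto; apply Permutation_sym; auto.
  - split; intro; left. apply A_subst; auto. apply A_subst_back; auto.
  - split; intro; left; eapply A_ct; eauto. intros M HM v. symmetry; apply H; auto.
  - destruct (A_var L P B V V' X) as [h1 h2]; auto. split; intro; left; auto.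
  - split; intro HA; right; split; try apply unsat_bot; eapply Alive_Dead; eauto; apply unsat_bot.
  - destruct (A_dup L P0 P B V); split; intro; left; auto.
Qed.

Lemma Inv_eqv s t : eqv_b CT s t -> (Inv s -> Inv t) /\ (Inv t -> Inv s).
Proof.
  intro H. pose proof (unsat_eqv _ _ H) as Hu. destruct (Alive_eqv _ _ H) as [h1 h2].
  unfold Inv in *. split; (intros [h|[h3 h4]]; [auto|right; split; auto; apply Hu; auto]).
Qed.
End Main.


Section Main2.
Context {F Pb Pc : Type} (CT : theory F Pb) (Prog : program F Pb Pc)
  (Hrr : range_restricted Prog) (st0 : estate F Pb Pc).

Lemma Alive_raw (s t : bstate F Pb Pc) : raw_b Prog s t -> Alive CT Prog st0 s -> Alive CT Prog st0 t.
Proof.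
  destruct 1 as [r H1l H1p H2l H2p L Ps B V Hv Hk Hr _ | r H1l H1p L Ps B V Hv Hk];
  intros HA N; simpl in *.
  - destruct (HA (S N)) as [G' [R [H1 [H2 [H3 [Z HZ]]]]]]; simpl in *.
    rewrite mscale_S in HZ.
    set (W := L ++ Ps ++ mscale (S N) (H1p ++ H2p ++ Ps) ++ Z).
    exists (kept r ++ bodyc r ++ W), (H1p ++ Ps ++ mscale (S N) (H1p ++ H2p ++ Ps) ++ Z).
    assert (HZi : incl Z (H1p ++ H2p ++ Ps)).
    { intros a Ha; apply H3; eapply Permutation_in; [exact HZ|]; rewrite !in_app_iff; tauto. }
    repeat split.
    + eapply se_trans; [exact H1|]. eapply se_trans; [apply se_perm|].
      { instantiate (1 := kept r ++ removed r ++ W). rewrite H2, Hk, Hr, <- HZ. unfold W. psolve. }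
      eapply se_trans; [apply se_raw, raw_apply; eauto|].
      apply se_eqv, eqe_same. intro a; rewrite !in_app_iff; tauto.
    + unfold W. rewrite Hk. psolve.
    + intros a Ha. rewrite !in_app_iff in Ha.
      destruct Ha as [Ha|[Ha|[Ha|Ha]]]; try (apply mscale_incl in Ha); try (apply HZi in Ha);
      rewrite ?in_app_iff in *; tauto.
    + exists (H1p ++ Ps ++ Z). psolve.
  - set (K := S N).
    destruct (HA (K + K)) as [G' [R [H1 [H2 [H3 [Z HZ]]]]]]; cbn [bL bP bB bV] in *.
    set (Pf := H1p ++ removed r ++ Ps) in *.
    rewrite mscale_S, mscale_add in HZ.
    assert (HZi : incl Z Pf).
    { intros a Ha; apply H3; eapply Permutation_in; [exact HZ|]; rewrite !in_app_iff; tauto. }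
    set (W := L ++ removed r ++ Ps ++ mscale K Pf ++ mscale K H1p ++ mscale K Ps ++ Z).
    exists (kept r ++ mscale N (bodyc r) ++ bodyc r ++ W),
      (H1p ++ mscale N (bodyc r) ++ bodyc r ++ removed r ++ Ps ++ mscale K Pf ++ mscale K H1p ++ mscale K Ps ++ Z).
    repeat split.
    + eapply se_trans; [exact H1|]. eapply se_trans; [apply se_perm|].
      { instantiate (1 := kept r ++ removed r ++ (mscale N (removed r) ++ W)).
        rewrite H2, Hk, <- HZ. unfold W. subst Pf.
        rewrite (mscale_app K H1p (removed r ++ Ps)), (mscale_app K (removed r) Ps).
        unfold K. rewrite !mscale_S. psolve. }
      eapply se_trans; [apply se_raw, raw_apply; eauto|].
      eapply se_trans; [apply se_eqv, eqe_same|].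
      { instantiate (1 := guard r ++ (B ++ bodyb r)). intro a; rewrite !in_app_iff; tauto. }
      eapply se_trans; [apply se_perm|].
      { instantiate (1 := kept r ++ mscale N (removed r) ++ (bodyc r ++ W)). psolve. }
      eapply se_trans; [apply iter; eauto|].
      { apply incl_appr, incl_refl. }
      apply se_perm. psolve.
    + unfold W. rewrite Hk. psolve.
    + intros a Ha. rewrite !in_app_iff in Ha.
      repeat destruct Ha as [Ha|Ha]; try (apply mscale_incl in Ha); try (apply HZi in Ha);
      subst Pf; rewrite ?in_app_iff in *; tauto.
    + exists (H1p ++ removed r ++ Ps ++ mscale K H1p ++ mscale K Ps ++ Z).
      subst Pf. fold K.
      rewrite (mscale_app K H1p (removed r ++ bodyc r ++ Ps)), (mscale_app K (removed r) (bodyc r ++ Ps)),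
        (mscale_app K (bodyc r) Ps), (mscale_app K H1p (removed r ++ Ps)), (mscale_app K (removed r) Ps).
      unfold K. rewrite !mscale_S. psolve.
Qed.

Lemma unsat_raw (s t : bstate F Pb Pc) : raw_b Prog s t -> unsat CT (bB s) -> unsat CT (bB t).
Proof.
  destruct 1; simpl; apply unsat_incl; intros a; rewrite !in_app_iff; tauto.
Qed.

Lemma Inv_star s t : star_b CT Prog s t -> Inv CT Prog st0 s -> Inv CT Prog st0 t.
Proof.
  induction 1 as [s t [[s0 [t0 [H1 [H2 [H3 _]]]]]|H]| |]; auto.
  - intro h. apply (Inv_eqv _ _ _ _ _ H3). apply (proj1 (Inv_eqv _ _ _ _ _ H1)) in h.
    destruct h as [h|[hu hd]]; [left; eapply Alive_raw; eauto|right; split; auto].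
    eapply unsat_raw; eauto.
  - apply (Inv_eqv _ _ _ _ _ H).
Qed.
End Main2.

Theorem theorem1 (F Pb Pc : Type) (CT : theory F Pb)
  (HCT : sat_complete CT)
  (Prog : program F Pb Pc) (Hrr : range_restricted Prog)
  (G : list (chr F Pc)) (B : list (batom F Pb)) (V : nat -> Prop)
  (L P : list (chr F Pc)) (B' : list (batom F Pb)) :
  star_b CT Prog (BS G [] B V) (BS L P B' V) ->
  forall N : nat,
    exists G' : list (chr F Pc),
      star_e CT Prog (ES G B V) (ES G' B' V) /\ msub (L ++ mscale N P) G'.
Proof.
  intros Hs N.
  assert (HI : Inv CT Prog (ES G B V) (BS G [] B V)).
  { left. intro n. exists G, []. repeat split; simpl.
    - apply rt_refl.
    - rewrite app_nil_r; apply Permutation_refl.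
    - intros a [].
    - rewrite mscale_nil. exists []. constructor. }
  apply (Inv_star CT Prog Hrr (ES G B V)) in Hs; auto.
  destruct Hs as [HA|[Hu [t [Ht Htu]]]].
  - destruct (HA N) as [G' [R [H1 [H2 [H3 [Z HZ]]]]]]; simpl in *.
    exists G'; split; auto. exists (P ++ Z). rewrite H2, <- HZ, mscale_S. psolve.
  - exists (L ++ mscale N P). split; [|exists []; rewrite app_nil_r; apply Permutation_refl].
    eapply se_trans; [exact Ht|].
    destruct t as [Gt Bt Vt]; simpl in *.
    apply se_eqv. eapply eqe_trans; [apply eqe_unsat; eauto|].
    eapply eqe_trans; [apply (eqe_bot _ Gt []) |].
    pose proof (star_V CT Prog _ _ Ht) as HV; simpl in HV.
    eapply eqe_trans; [apply eqe_sym; exact HV|].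
    eapply eqe_trans; [apply (eqe_bot _ [])|].
    apply eqe_sym, eqe_unsat. exact Hu.
Qed.
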